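(* Let $N\ge2$, $\Omega=\mathbb{R}^{N-1}\times(0,\infty)$, $D=\overline{\Omega}\times\overline{\Omega}\times(0,\infty)$, and fix $\epsilon>0$, $\delta>0$, $k>0$. Let \[ H(x,y,t):=-2\int_0^t\Gamma_{N-1}\!\left(x'-y',\frac{t-\tau}{\epsilon}+\frac{k}{\delta}\tau\right)\partial_{\xi}\Gamma_1\!\left(x_N+y_N+\frac{\tau}{\delta},\frac{t-\tau}{\epsilon}\right)d\tau,\quad (x,y,t)\in D. \] Set $\Lambda:=\max\{\delta,k\epsilon\}$, $\lambda:=\min\{\delta,k\epsilon\}$. Then there exists $C>0$ such that for all $(x,y,t)\in D$, \[ C^{-1}\underline{h}(x,y,t)\,\Gamma_{N-1}\!\left(x'-y',\frac{\lambda}{\epsilon\delta}t\right)\le H(x,y,t)\le C\,\overline{h}(x,y,t)\,\Gamma_{N-1}\!\left(x'-y',\frac{\Lambda}{\epsilon\delta}t\right), \] where $\overline h=\underline h=1$ on $D_1$; $\overline h=\Gamma_1(x_N+y_N,t/\epsilon)$ and $\underline h=\Gamma_1(x_N+y_N,t/(2\epsilon))$ on $D_2\cup D_4$; $\overline h=(x_N+y_N+t/\delta)\Gamma_1(x_N+y_N,t/\epsilon)$ and $\underline h=(x_N+y_N+t/\delta)\Gamma_1(x_N+y_N,t/(2\epsilon))$ on $D_3$. Here $D_1=\{(x,y,t)\in D:\epsilon(x_N+y_N)^2<6t,\ t<12\delta^2/\epsilon\}$, $D_2=\{(x,y,t)\in D:\epsilon(x_N+y_N)^2<6t,\ t\ge12\delta^2/\epsilon\}$,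 $D_3=\{(x,y,t)\in D:\epsilon(x_N+y_N)^2\ge6t,\ x_N+y_N+t/\delta<\delta/\epsilon\}$, $D_4=\{(x,y,t)\in D:\epsilon(x_N+y_N)^2\ge6t,\ x_N+y_N+t/\delta\ge\delta/\epsilon\}$.
   Context: Points are written $x=(x',x_N)$ with $x'\in\mathbb{R}^{N-1}$, $x_N\ge0$. For $d\ge1$, $\Gamma_d(x,t)=(4\pi t)^{-d/2}\exp(-|x|^2/(4t))$ on $\mathbb{R}^d\times(0,\infty)$; $\partial_\xi\Gamma_1(\xi,s)$ is the derivative of $\Gamma_1$ in its spatial variable. *)

(* Defs.v *)
From Stdlib Require Import Reals.
From Coquelicot Require Import Coquelicot.
Open Scope R_scope.

(* Squared Euclidean distance between the first n coordinates of u and v: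
   points of R^n are represented by functions nat -> R, only indices < n matter. *)
Fixpoint sqdist (n : nat) (u v : nat -> R) : R :=
  match n with
  | O => 0
  | S m => sqdist m u v + (u m - v m) ^ 2
  end.

(* Heat kernel in dimension d, given the squared norm r2 = |z|^2 of the point z:
   Gamma_d(z,t) = (4 pi t)^(-d/2) exp(-|z|^2/(4t)). *)
Definition Gammad (d : nat) (r2 t : R) : R :=
  / Rpower (4 * PI * t) (INR d / 2) * exp (- r2 / (4 * t)).

Definition GammaN1 (N : nat) (x' y' : nat -> R) (t : R) : R :=
  Gammad (N - 1) (sqdist (N - 1) x' y') t.

Definition Gamma1 (xi s : R) : R := Gammad 1 (xi ^ 2) s.

Definition dGamma1 (xi s : R) : R := Derive (fun z => Gamma1 z s) xi.

Definition Hker (N : nat) (eps delta k : R) (x' : nat -> R) (xN : R)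
    (y' : nat -> R) (yN : R) (t : R) : R :=
  -2 * RInt (fun tau =>
        GammaN1 N x' y' ((t - tau) / eps + k / delta * tau)
        * dGamma1 (xN + yN + tau / delta) ((t - tau) / eps)) 0 t.

(* Main.v *)
Require Import Defs.
From Stdlib Require Import Reals Lra Psatz.
From Coquelicot Require Import Coquelicot.
Open Scope R_scope.

Lemma exp_le_mono x y : x <= y -> exp x <= exp y.
Proof. intros [H|H]; [left; apply exp_increasing; auto| subst; lra]. Qed.


Definition cut (t : R) (f : R -> R) (z : R) : R := if Rlt_dec z t then f z else 0.

Lemma ball_R_iff (x y e : R) : ball x e y <-> Rabs (y - x) < e.
Proof.
  unfold ball; simpl; unfold AbsRing_ball, abs, minus, plus, opp; simpl. tauto.
Qed.

Lemma cut_cont_lt t f z : z < t -> continuous f z -> continuous (cut t f) z.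
Proof.
  intros Hz Hc. apply continuous_ext_loc with f; auto.
  assert (Hp : 0 < t - z) by lra.
  exists (mkposreal _ Hp). intros y Hy. apply ball_R_iff in Hy. simpl in Hy.
  unfold cut. destruct (Rlt_dec y t); auto.
    exfalso. apply Rabs_def2 in Hy. unfold minus, plus, opp in Hy; simpl in Hy. match goal with H : ~ _ < _ |- _ => apply Rnot_lt_le in H end; lra.
Qed.

Lemma cut_cont_gt t f z : t < z -> continuous (cut t f) z.
Proof.
  intros Hz. apply continuous_ext_loc with (fun _ => 0).
  - assert (Hp : 0 < z - t) by lra.
    exists (mkposreal _ Hp). intros y Hy. apply ball_R_iff in Hy. simpl in Hy.
    unfold cut. destruct (Rlt_dec y t); auto.
    exfalso. apply Rabs_def2 in Hy. unfold minus, plus, opp in Hy; simpl in Hy. lra.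
  - apply continuous_const.
Qed.

Lemma cut_cont_at t f e K rho : 0 < rho -> 0 < e -> 0 <= K ->
  (forall z, t - rho < z < t -> Rabs (f z) <= K * sqrt ((t - z) / e)) ->
  continuous (cut t f) t.
Proof.
  intros Hr He HK Hb. apply continuity_pt_filterlim.
  unfold continuity_pt, continue_in, limit1_in, limit_in. intros ep Hep.
  assert (Hq : 0 < ep / (K + 1)) by (apply Rdiv_lt_0_compat; lra).
  exists (Rmin rho (e * (ep / (K+1))^2)). split.
  - apply Rmin_pos; auto. apply Rmult_lt_0_compat; auto. apply pow_lt; auto.
  - intros w [[_ Hne] Hd].
    change (Rabs (cut t f w - cut t f t) < ep).
    change (Rabs (w - t) < Rmin rho (e * (ep / (K+1))^2)) in Hd.
    unfold cut. destruct (Rlt_dec t t) as [Htt|_]; [exfalso; apply (Rlt_irrefl t Htt)|].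
    rewrite Rminus_0_r.
    destruct (Rlt_dec w t) as [Hxt|Hxt].
    + assert (Hx1 : t - w < rho) by (apply Rabs_def2 in Hd; pose proof (Rmin_l rho (e * (ep / (K+1))^2)); lra).
      assert (Hx2 : t - w < e * (ep / (K+1))^2) by (apply Rabs_def2 in Hd; pose proof (Rmin_r rho (e * (ep / (K+1))^2)); lra).
      eapply Rle_lt_trans; [apply Hb; lra|].
      assert (Hs : sqrt ((t - w) / e) < ep / (K+1)).
      { rewrite <- (sqrt_pow2 (ep / (K+1))) by lra. apply sqrt_lt_1.
        - apply Rdiv_le_0_compat; lra.
        - apply pow2_ge_0.
        - apply Rmult_lt_reg_l with e; auto.
          replace (e * ((t-w)/e)) with (t-w) by (field; lra). lra. }
      assert (0 <= sqrt ((t - w) / e)) by apply sqrt_pos.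
      assert (ep = (K+1) * (ep / (K+1))) by (field; lra). nra.
    + rewrite Rabs_R0; auto.
Qed.

Lemma nonincr (F dF : R -> R) x y : x <= y ->
  (forall z, x < z < y -> is_derive F z (dF z)) ->
  (forall z, x <= z <= y -> continuity_pt F z) ->
  (forall z, x <= z <= y -> dF z <= 0) -> F y <= F x.
Proof.
  intros Hxy Hd Hc Hn.
  destruct (MVT_gen F x y dF) as [c [Hc1 Hc2]].
  - rewrite Rmin_left, Rmax_right by lra. auto.
  - rewrite Rmin_left, Rmax_right by lra. auto.
  - rewrite Rmin_left, Rmax_right in Hc1 by lra.
    specialize (Hn c Hc1). nra.
Qed.

Lemma Gamma1_eq x s : 0 < s -> Gamma1 x s = exp (- x ^ 2 / (4 * s)) / sqrt (4 * PI * s).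
Proof.
  intros Hs. unfold Gamma1, Gammad.
  replace (INR 1 / 2) with (/ 2) by (simpl; field).
  rewrite Rpower_sqrt by (pose proof PI_RGT_0; nra).
  unfold Rdiv. ring.
Qed.

Lemma Gamma1_pos x s : 0 < s -> 0 < Gamma1 x s.
Proof.
  intros Hs. rewrite Gamma1_eq by auto. apply Rdiv_lt_0_compat; [apply exp_pos|].
  apply sqrt_lt_R0. pose proof PI_RGT_0; nra.
Qed.

Lemma mul_div_le (c N D G : R) : 0 <= G -> 0 < D -> c * D <= N -> c * G <= N * G / D.
Proof.
  intros HG HD H. replace (N * G / D) with (G * (N / D)) by (field; lra).
  rewrite (Rmult_comm c G). apply Rmult_le_compat_l; auto.
  apply Rmult_le_reg_r with D; auto. unfold Rdiv. rewrite Rmult_assoc, Rinv_l by lra. lra.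
Qed.

Lemma exp_neg_le u : 0 <= u -> exp (- u) * (1 + u) <= 1.
Proof.
  intros Hu. pose proof (exp_ineq1_le u). pose proof (exp_pos (-u)).
  assert (exp (-u) * exp u = 1) by (rewrite <- exp_plus; replace (-u+u) with 0 by ring; apply exp_0).
  nra.
Qed.

Lemma sqrt2_le : sqrt 2 <= 3/2.
Proof.
  rewrite <- (sqrt_pow2 (3/2)) by lra. apply sqrt_le_1_alt. lra.
Qed.

Lemma div_le_mul (X D c : R) : 0 < D -> X <= c * D -> X / D <= c.
Proof.
  intros HD H. apply Rmult_le_reg_r with D; auto.
  unfold Rdiv. rewrite Rmult_assoc, Rinv_l by lra. lra.
Qed.

Section OneD.
Variables eps delta a t : R.
Hypothesis heps : 0 < eps.
Hypothesis hdel : 0 < delta.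
Hypothesis ha : 0 <= a.
Hypothesis ht : 0 < t.

Definition sv (z : R) := (t - z) / eps.
Definition xi (z : R) := a + z / delta.
Definition Bv (z : R) := a + (2 * t - z) / delta.
Definition Ev (z : R) := exp (- (xi z) ^ 2 / (4 * sv z)).
Definition J (z : R) := xi z * Ev z / (sv z * sqrt (4 * PI * sv z)).
Definition Phi (z : R) := 4 * sqrt (sv z) / Bv z * Ev z.
Definition dPhi (z : R) :=
  - (/ eps) * (xi z * Ev z / (sv z * sqrt (sv z))) * (1 + 2 * sv z / (Bv z) ^ 2).

Lemma sv_pos z : z < t -> 0 < sv z.
Proof. intros; unfold sv; apply Rdiv_lt_0_compat; lra. Qed.

Lemma Bv_pos z : z <= t -> 0 < Bv z.
Proof.
  intros; unfold Bv. assert (0 < (2*t - z)/delta) by (apply Rdiv_lt_0_compat; lra). lra.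
Qed.

Lemma Phi_derive z : z < t -> is_derive Phi z (dPhi z).
Proof.
  intros Hz. pose proof (sv_pos z Hz) as Hs. pose proof (Bv_pos z (Rlt_le _ _ Hz)) as HB.
  unfold Phi, dPhi, Ev, xi, Bv, sv in *.
  auto_derive.
  - repeat split; try lra; auto.
  - unfold Rminus, Rdiv. set (r := sqrt ((t + - z) * / eps)).
    assert (Hr : r * r = (t - z)/eps) by (apply sqrt_sqrt; unfold Rdiv in Hs; lra).
    assert (Hr0 : 0 < r) by (apply sqrt_lt_R0; unfold Rdiv in Hs; lra).
    set (E := exp _).
    clearbody r E.
    assert (Hz' : z = t - eps * (r * r)) by (rewrite Hr; field; lra).
    rewrite Hz'. rewrite Hz' in HB.
    field. repeat split; try lra.
    all: assert (0 < eps * (r*r)) by (apply Rmult_lt_0_compat; nra); nra.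
Qed.

Lemma Ev_pos z : 0 < Ev z.
Proof. apply exp_pos. Qed.

Lemma Ev_le1 z : z < t -> Ev z <= 1.
Proof.
  intros Hz. unfold Ev. rewrite <- exp_0. apply exp_le_mono.
  pose proof (sv_pos z Hz). unfold Rdiv.
  assert (0 <= (xi z)^2) by (apply pow2_ge_0).
  assert (0 < / (4 * sv z)) by (apply Rinv_0_lt_compat; lra). nra.
Qed.

Lemma sqrt4PI_ge1 : 1 <= sqrt (4 * PI).
Proof.
  rewrite <- sqrt_1. apply sqrt_le_1_alt. pose proof PI_RGT_0. pose proof PI_4.
  pose proof PI2_1. lra.
Qed.

Lemma sqrt4PI_le4 : sqrt (4 * PI) <= 4.
Proof.
  replace 4 with (sqrt (4*4)) at 2 by (rewrite sqrt_square; lra).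
  apply sqrt_le_1_alt. pose proof PI_4. lra.
Qed.

Lemma sqrt_4PIs z : z < t -> sqrt (4 * PI * sv z) = sqrt (4 * PI) * sqrt (sv z).
Proof.
  intros Hz. pose proof (sv_pos z Hz). pose proof PI_RGT_0.
  apply sqrt_mult; lra.
Qed.

Lemma J_nonneg z : 0 <= z < t -> 0 <= J z.
Proof.
  intros [H0 Hz]. unfold J. pose proof (sv_pos z Hz). pose proof (Ev_pos z).
  assert (0 <= xi z) by (unfold xi; assert (0 <= z/delta) by (apply Rdiv_le_0_compat; lra); lra).
  assert (0 < sqrt (4 * PI * sv z)) by (apply sqrt_lt_R0; pose proof PI_RGT_0; nra).
  apply Rdiv_le_0_compat; [nra | nra].
Qed.

Lemma dPhi_J z : z < t ->
  dPhi z = - (sqrt (4 * PI) / eps) * J z * (1 + 2 * sv z / (Bv z) ^ 2).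
Proof.
  intros Hz. unfold dPhi, J. rewrite sqrt_4PIs by auto.
  pose proof (sv_pos z Hz). assert (0 < sqrt (sv z)) by (apply sqrt_lt_R0; lra). pose proof (Bv_pos z (Rlt_le _ _ Hz)).
  assert (0 < sqrt (4*PI)) by (pose proof sqrt4PI_ge1; lra).
  field. repeat split; try lra. all: match goal with |- ?G => idtac G end.
Qed.

Lemma J_cont z : z < t -> continuous J z.
Proof.
  intros Hz. apply (@ex_derive_continuous R_AbsRing R_NormedModule). pose proof (sv_pos z Hz).
  pose proof PI_RGT_0. unfold J, Ev, xi, sv in *.
  auto_derive.
  unfold Rminus, Rdiv in *. set (u := (t + - z) * / eps) in *.
  assert (0 < sqrt (4*PI*u)) by (apply sqrt_lt_R0; nra).
  repeat split; try nra.
Qed.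

Lemma exp_sq_bound y : 0 <= y -> exp (- y) * y ^ 2 <= 4.
Proof.
  intros Hy. rewrite exp_Ropp.
  assert (Hh : exp y = exp (y/2) * exp (y/2)) by (rewrite <- exp_plus; f_equal; field).
  pose proof (exp_ineq1_le (y/2)).
  assert (y^2 <= 4 * exp y) by (rewrite Hh; nra).
  pose proof (exp_pos y).
  apply Rmult_le_reg_l with (exp y); auto.
  field_simplify; try lra.
Qed.

Lemma J_near z : t / 2 < z < t ->
  Rabs (J z) <= 64 * (2 * delta / t) ^ 3 * sqrt ((t - z) / eps).
Proof.
  intros [Hz1 Hz2].
  rewrite Rabs_right by (apply Rle_ge, J_nonneg; lra).
  pose proof (sv_pos z Hz2) as Hs.
  unfold J. rewrite sqrt_4PIs by auto. fold (sv z).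
  set (r := sqrt (sv z)).
  assert (Hr : r * r = sv z) by (apply sqrt_sqrt; lra).
  assert (Hr0 : 0 < r) by (apply sqrt_lt_R0; lra).
  set (p := sqrt (4 * PI)). assert (Hp : 1 <= p) by apply sqrt4PI_ge1.
  assert (Hxi : t / (2 * delta) <= xi z).
  { unfold xi. assert (t/(2*delta) <= z/delta).
    { unfold Rdiv. apply Rmult_le_reg_l with (2*delta); try lra.
      field_simplify; lra. }
    lra. }
  assert (Hxi0 : 0 < xi z) by (assert (0 < t/(2*delta)) by (apply Rdiv_lt_0_compat; lra); lra).
  set (x := xi z) in *. set (E := Ev z).
  assert (HE : E * (x^2/(4 * sv z))^2 <= 4).
  { unfold E, Ev. fold x. replace (- x^2 / (4 * sv z)) with (- (x^2/(4 * sv z))) by (field; lra).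
    apply exp_sq_bound. apply Rdiv_le_0_compat; [apply pow2_ge_0| lra]. }
  rewrite <- Hr in HE.
  assert (HE4 : E * x^4 <= 64 * r^4).
  { replace ((x^2/(4*(r*r)))^2) with (x^4 / (16 * r^4)) in HE by (field; lra).
    apply Rmult_le_reg_r with (/ (16 * r^4)).
    - apply Rinv_0_lt_compat. assert (0 < r^4) by (apply pow_lt; lra). lra.
    - replace (64 * r^4 * / (16 * r^4)) with 4 by (field; lra). unfold Rdiv in HE. lra. }
  set (w := / x).
  assert (Hw : w <= 2 * delta / t).
  { unfold w. replace (2*delta/t) with (/ (t/(2*delta))) by (field; lra).
    apply Rinv_le_contravar; auto. apply Rdiv_lt_0_compat; lra. }
  assert (Hw0 : 0 < w) by (apply Rinv_0_lt_compat; lra).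
  assert (HxE : x * E <= 64 * r^4 * w^3).
  { replace (x * E) with (E * x^4 * w^3) by (unfold w; field; lra).
    apply Rmult_le_compat_r; [apply pow_le; lra| auto]. }
  assert (Hw3 : w^3 <= (2*delta/t)^3) by (apply pow_incr; lra).
  assert (HE0 : 0 < E) by apply Ev_pos.
  assert (HK : x * E <= 64 * (2*delta/t)^3 * r^4).
  { eapply Rle_trans; [apply HxE|]. assert (0 <= r^4) by (apply pow_le; lra). nra. }
  change (sqrt ((t - z) / eps)) with r. rewrite <- Hr.
  apply Rmult_le_reg_r with (r * r * (p * r)).
  - assert (0 < p * r) by nra. nra.
  - replace (x * E / (r*r * (p*r)) * (r*r*(p*r))) with (x*E) by (field; split; lra).
    assert (0 <= (2*delta/t)^3) by (apply pow_le; apply Rdiv_le_0_compat; lra).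
    assert (0 <= r^4) by (apply pow_le; lra).
    replace (64 * (2*delta/t)^3 * r * (r*r*(p*r))) with (64 * (2*delta/t)^3 * r^4 * p) by ring.
    set (X := 64 * (2*delta/t)^3 * r^4) in *. assert (0 <= X) by (unfold X; nra). nra.
Qed.

Lemma Phi_bounds z : z < t -> 0 <= Phi z <= 4 * delta / t * sqrt ((t - z) / eps).
Proof.
  intros Hz. pose proof (sv_pos z Hz). pose proof (Bv_pos z (Rlt_le _ _ Hz)).
  pose proof (Ev_pos z). pose proof (Ev_le1 z Hz).
  assert (Hr : 0 <= sqrt (sv z)) by apply sqrt_pos.
  assert (HB : t / delta <= Bv z).
  { unfold Bv. assert (t/delta <= (2*t - z)/delta).
    { unfold Rdiv. apply Rmult_le_compat_r; [left; apply Rinv_0_lt_compat; lra| lra]. }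
    lra. }
  unfold Phi. fold (sv z). split.
  - apply Rmult_le_pos; [|lra]. apply Rdiv_le_0_compat; lra.
  - assert (4 * sqrt (sv z) / Bv z <= 4 * delta / t * sqrt (sv z)).
    { assert (HiB : / Bv z <= delta / t).
      { replace (delta/t) with (/(t/delta)) by (field; lra).
        apply Rinv_le_contravar; auto. apply Rdiv_lt_0_compat; lra. }
      assert (0 < / Bv z) by (apply Rinv_0_lt_compat; lra).
      unfold Rdiv in *. nra. }
    assert (0 <= 4 * sqrt (sv z) / Bv z) by (apply Rdiv_le_0_compat; lra).
    nra.
Qed.

Definition Jx := cut t J.
Definition Phix := cut t Phi.
Definition dPhix := cut t dPhi.

Lemma Jx_cont z : continuous Jx z.
Proof.
  destruct (Rtotal_order z t) as [H|[H|H]].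
  - apply cut_cont_lt; auto. apply J_cont; auto.
  - subst z. apply (cut_cont_at t J eps (64 * (2 * delta / t) ^ 3) (t/2)); try lra.
    + assert (0 <= (2*delta/t)^3) by (apply pow_le; apply Rdiv_le_0_compat; lra). lra.
    + intros z Hz. apply J_near. lra.
  - apply cut_cont_gt; auto.
Qed.

Lemma Phix_cont_t : continuous Phix t.
Proof.
  apply (cut_cont_at t Phi eps (4 * delta / t) t); try lra.
  - apply Rdiv_le_0_compat; lra.
  - intros z Hz. destruct (Phi_bounds z (proj2 Hz)). rewrite Rabs_right; lra.
Qed.

Lemma Jx_exRInt u v : ex_RInt Jx u v.
Proof. apply (@ex_RInt_continuous R_CompleteNormedModule). intros; apply Jx_cont. Qed.

Lemma RI_derive z : is_derive (fun x => RInt Jx 0 x) z (Jx z).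
Proof.
  apply (is_derive_RInt Jx (RInt Jx 0) 0 z).
  - apply filter_forall. intros b. apply (@RInt_correct R_CompleteNormedModule), Jx_exRInt.
  - apply Jx_cont.
Qed.

Lemma RI_cont z : continuous (fun x => RInt Jx 0 x) z.
Proof. apply (@ex_derive_continuous R_AbsRing R_NormedModule). eexists; apply RI_derive. Qed.

Lemma Phi_cont z : z < t -> continuous Phi z.
Proof. intros Hz. apply (@ex_derive_continuous R_AbsRing R_NormedModule). eexists; apply Phi_derive; auto. Qed.

Lemma Phix_cont z : z <= t -> continuous Phix z.
Proof.
  intros [Hz|Hz]. - apply cut_cont_lt; auto. apply Phi_cont; auto.
  - subst; apply Phix_cont_t.
Qed.

Lemma Phix_derive z : z < t -> is_derive Phix z (dPhix z).
Proof.
  intros Hz. unfold dPhix. unfold cut at 1. destruct (Rlt_dec z t); [|lra].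
  apply is_derive_ext_loc with Phi; [|apply Phi_derive; auto].
  assert (Hp : 0 < t - z) by lra.
  exists (mkposreal _ Hp). intros y Hy. apply ball_R_iff in Hy. simpl in Hy.
  unfold Phix, cut. destruct (Rlt_dec y t); auto.
  exfalso. apply Rabs_def2 in Hy. unfold minus, plus, opp in Hy; simpl in Hy.
  match goal with H : ~ _ < _ |- _ => apply Rnot_lt_le in H end; lra.
Qed.

Lemma mono_helper (sg c tau0 : R) : 0 <= tau0 < t ->
  (forall z, tau0 <= z < t -> sg * J z + c * dPhi z <= 0) ->
  sg * RInt Jx 0 t <= sg * RInt Jx 0 tau0 + c * Phi tau0.
Proof.
  intros [H0 H1] Hd.
  set (F := fun x => sg * RInt Jx 0 x + c * Phix x).
  set (dF := fun x => sg * Jx x + c * dPhix x).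
  assert (Hm : F t <= F tau0).
  { apply (nonincr F dF); [lra| | |].
    - intros z Hz. unfold F, dF.
      exact (is_derive_plus _ _ _ _ _ (is_derive_scal _ _ sg _ (RI_derive z))
               (is_derive_scal _ _ c _ (Phix_derive z (proj2 Hz)))).
    - intros z Hz. apply continuity_pt_filterlim. unfold F.
      apply (@continuous_plus R_UniformSpace R_AbsRing R_NormedModule (fun x => sg * RInt Jx 0 x) (fun x => c * Phix x)).
      + apply (@continuous_scal_r R_UniformSpace R_AbsRing R_NormedModule sg (fun x => RInt Jx 0 x)). apply RI_cont.
      + apply (@continuous_scal_r R_UniformSpace R_AbsRing R_NormedModule c Phix). apply Phix_cont; lra.
    - intros z [Hz1 Hz2]. unfold dF, Jx, dPhix, cut. destruct (Rlt_dec z t).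
      + apply Hd; lra.
      + lra. }
  unfold F, Phix, cut in Hm. destruct (Rlt_dec t t); [lra|].
  destruct (Rlt_dec tau0 t); [|lra]. lra.
Qed.

Definition kap := eps / sqrt (4 * PI).
Definition Av := a + t / delta.

Lemma kap_pos : 0 < kap.
Proof. unfold kap. apply Rdiv_lt_0_compat; auto. pose proof sqrt4PI_ge1; lra. Qed.

Lemma kap_dPhi z : z < t -> kap * dPhi z = - J z * (1 + 2 * sv z / (Bv z)^2).
Proof.
  intros Hz. rewrite dPhi_J by auto. unfold kap.
  pose proof sqrt4PI_ge1. pose proof (Bv_pos z ltac:(lra)). field. repeat split; lra.
Qed.

Lemma I_upper tau0 : 0 <= tau0 < t -> RInt Jx 0 t <= RInt Jx 0 tau0 + kap * Phi tau0.
Proof.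
  intros Ht0. pose proof (mono_helper 1 kap tau0 Ht0) as H.
  rewrite !Rmult_1_l in H. apply H.
  intros z Hz. rewrite kap_dPhi by lra.
  pose proof (J_nonneg z ltac:(lra)). pose proof (sv_pos z (proj2 Hz)).
  assert (0 <= 2 * sv z / (Bv z)^2) by (apply Rdiv_le_0_compat; [lra| pose proof (Bv_pos z ltac:(lra)); nra]).
  nra.
Qed.

Lemma I_lower tau0 : 0 <= tau0 < t ->
  RInt Jx 0 tau0 + kap * Phi tau0 / (1 + 2 * sv tau0 / Av ^ 2) <= RInt Jx 0 t.
Proof.
  intros Ht0. set (q := 1 + 2 * sv tau0 / Av ^ 2).
  assert (HA : 0 < Av) by (unfold Av; assert (0 < t/delta) by (apply Rdiv_lt_0_compat; lra); lra).
  assert (Hq : 1 <= q) by (unfold q; pose proof (sv_pos tau0 ltac:(lra)); assert (0 <= 2 * sv tau0 / Av^2) by (apply Rdiv_le_0_compat; nra); lra).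
  pose proof (mono_helper (-1) (- (kap / q)) tau0 Ht0) as H.
  cut (-1 * RInt Jx 0 t <= -1 * RInt Jx 0 tau0 + - (kap / q) * Phi tau0).
  { intros; unfold Rdiv in *; lra. }
  apply H. intros z Hz.
  replace (- (kap / q) * dPhi z) with (- (kap * dPhi z) / q) by (field; lra).
  rewrite kap_dPhi by lra.
  pose proof (J_nonneg z ltac:(lra)) as HJ. pose proof (sv_pos z (proj2 Hz)) as Hs.
  pose proof (Bv_pos z ltac:(lra)) as HB.
  assert (HAB : Av <= Bv z).
  { unfold Av, Bv. assert (t/delta <= (2*t - z)/delta) by (unfold Rdiv; apply Rmult_le_compat_r; [left; apply Rinv_0_lt_compat|]; lra). lra. }
  assert (Hss : sv z <= sv tau0) by (unfold sv; unfold Rdiv; apply Rmult_le_compat_r; [left; apply Rinv_0_lt_compat|]; lra).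
  assert (Hr : 2 * sv z / (Bv z)^2 <= 2 * sv tau0 / Av^2).
  { unfold Rdiv. apply Rmult_le_compat; try lra.
    - left; apply Rinv_0_lt_compat; nra.
    - apply Rinv_le_contravar; nra. }
  assert (Hq2 : 1 + 2 * sv z / (Bv z)^2 <= q) by (unfold q; lra).
  assert (HX : - (- J z * (1 + 2 * sv z / Bv z ^ 2)) / q <= J z).
  { replace (- (- J z * (1 + 2 * sv z / Bv z ^ 2)) / q) with (J z * ((1 + 2 * sv z / Bv z ^ 2) / q)) by (field; lra).
    assert ((1 + 2 * sv z / Bv z ^ 2) / q <= 1).
    { apply Rmult_le_reg_r with q; try lra. unfold Rdiv. rewrite Rmult_assoc, Rinv_l by lra. lra. }
    nra. }
  lra.
Qed.

Lemma Jx_nonneg z : 0 <= z -> 0 <= Jx z.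
Proof. intros. unfold Jx, cut. destruct (Rlt_dec z t); [apply J_nonneg; lra| lra]. Qed.

Lemma RI_nonneg x : 0 <= x -> 0 <= RInt Jx 0 x.
Proof. intros. apply RInt_ge_0; auto. apply Jx_exRInt. intros; apply Jx_nonneg; lra. Qed.

Lemma isqrt_derive z : z < t ->
  is_derive (fun x => / sqrt (sv x)) z (/ (2 * eps) / (sv z * sqrt (sv z))).
Proof.
  intros Hz. pose proof (sv_pos z Hz) as Hs. unfold sv in *.
  auto_derive.
  - split; auto. split; auto. apply Rgt_not_eq, sqrt_lt_R0; auto.
  - unfold Rminus, Rdiv in *. set (r := sqrt ((t + - z) * / eps)).
    assert (Hr : r * r = (t + - z) * / eps) by (apply sqrt_sqrt; lra).
    assert (Hr0 : 0 < r) by (apply sqrt_lt_R0; lra).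
    clearbody r. rewrite <- Hr. field. lra.
Qed.

Lemma isqrt_cont z : z < t -> continuous (fun x => / sqrt (sv x)) z.
Proof. intros Hz. apply (@ex_derive_continuous R_AbsRing R_NormedModule). eexists; apply isqrt_derive; auto. Qed.

Lemma I_piece tau1 : 0 <= tau1 < t ->
  RInt Jx 0 tau1 <= 2 * Av * kap * (/ sqrt (sv tau1) - / sqrt (sv 0)).
Proof.
  intros [H0 H1].
  set (F := fun x => RInt Jx 0 x + (- (2 * Av * kap)) * / sqrt (sv x)).
  set (dF := fun x => Jx x + (- (2 * Av * kap)) * (/ (2 * eps) / (sv x * sqrt (sv x)))).
  assert (Hm : F tau1 <= F 0).
  { apply (nonincr F dF); [lra| | |].
    - intros z Hz. unfold F, dF.
      exact (is_derive_plus _ _ _ _ _ (RI_derive z)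
               (is_derive_scal _ _ (- (2 * Av * kap)) _ (isqrt_derive z ltac:(lra)))).
    - intros z Hz. apply continuity_pt_filterlim. unfold F.
      apply (@continuous_plus R_UniformSpace R_AbsRing R_NormedModule (fun x => RInt Jx 0 x) (fun x => (- (2 * Av * kap)) * / sqrt (sv x))).
      + apply RI_cont.
      + apply (@continuous_scal_r R_UniformSpace R_AbsRing R_NormedModule (- (2 * Av * kap)) (fun x => / sqrt (sv x))). apply isqrt_cont; lra.
    - intros z [Hz1 Hz2]. unfold dF, Jx, cut. destruct (Rlt_dec z t); [|lra].
      unfold J, kap. rewrite sqrt_4PIs by auto.
      pose proof (sv_pos z r) as Hs. set (q := sqrt (sv z)).
      assert (Hq : 0 < q) by (apply sqrt_lt_R0; lra).
      pose proof sqrt4PI_ge1 as Hp. set (p := sqrt (4*PI)) in *.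
      assert (HE : Ev z <= 1) by (apply Ev_le1; auto). pose proof (Ev_pos z).
      assert (Hxi : 0 <= xi z <= Av).
      { unfold xi, Av. split.
        - assert (0 <= z/delta) by (apply Rdiv_le_0_compat; lra). lra.
        - assert (z/delta <= t/delta) by (unfold Rdiv; apply Rmult_le_compat_r; [left; apply Rinv_0_lt_compat|]; lra). lra. }
      replace (- (2 * Av * (eps / p)) * (/ (2 * eps) / (sv z * q))) with (- (Av / (sv z * (p * q)))) by (field; repeat split; lra).
      assert (xi z * Ev z / (sv z * (p * q)) <= Av / (sv z * (p * q))).
      { destruct Hxi. unfold Rdiv. apply Rmult_le_compat_r. left; apply Rinv_0_lt_compat; apply Rmult_lt_0_compat; [lra| apply Rmult_lt_0_compat; lra]. nra. }
      lra. }
  unfold F in Hm. rewrite RInt_point in Hm. unfold zero in Hm; simpl in Hm. lra.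
Qed.

Lemma I_D1up : RInt Jx 0 t <= 6 * eps.
Proof.
  assert (HA : 0 < Av) by (unfold Av; assert (0 < t/delta) by (apply Rdiv_lt_0_compat; lra); lra).
  assert (Hk : kap <= eps) by (unfold kap; pose proof sqrt4PI_ge1;
     apply Rmult_le_reg_r with (sqrt (4*PI)); try lra; unfold Rdiv; rewrite Rmult_assoc, Rinv_l by lra; nra).
  pose proof kap_pos as Hk0.
  assert (HS0 : sv 0 = t / eps) by (unfold sv; f_equal; ring).
  assert (HB : forall z, z < t -> Av <= Bv z).
  { intros z Hz. unfold Av, Bv. assert (t/delta <= (2*t - z)/delta) by (unfold Rdiv; apply Rmult_le_compat_r; [left; apply Rinv_0_lt_compat|]; lra). lra. }
  assert (HPhi : forall z, z < t -> Phi z <= 4 * sqrt (sv z) / Av).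
  { intros z Hz. unfold Phi. pose proof (Ev_pos z). pose proof (Ev_le1 z Hz).
    pose proof (Bv_pos z ltac:(lra)). pose proof (HB z Hz).
    assert (0 <= sqrt (sv z)) by apply sqrt_pos.
    assert (4 * sqrt (sv z) / Bv z <= 4 * sqrt (sv z) / Av).
    { unfold Rdiv. apply Rmult_le_compat_l; [lra|]. apply Rinv_le_contravar; auto. }
    assert (0 <= 4 * sqrt (sv z) / Bv z) by (apply Rdiv_le_0_compat; lra). nra. }
  destruct (Rle_dec (t/eps) (Av^2)) as [Hc|Hc].
  - pose proof (I_upper 0 ltac:(lra)) as H. rewrite RInt_point in H. unfold zero in H; simpl in H.
    assert (Hs : sqrt (sv 0) <= Av).
    { rewrite HS0. rewrite <- (sqrt_pow2 Av) by lra. apply sqrt_le_1_alt; auto. }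
    pose proof (HPhi 0 ht).
    assert (4 * sqrt (sv 0) / Av <= 4) by (apply Rmult_le_reg_r with Av; auto; unfold Rdiv; rewrite Rmult_assoc, Rinv_l by lra; lra).
    assert (0 <= Phi 0) by (unfold Phi; pose proof (Ev_pos 0); pose proof (Bv_pos 0 ltac:(lra)); assert (0 <= sqrt (sv 0)) by apply sqrt_pos; assert (0 <= 4 * sqrt (sv 0) / Bv 0) by (apply Rdiv_le_0_compat; lra); nra).
    nra.
  - apply Rnot_le_lt in Hc.
    set (tau1 := t - eps * Av^2).
    assert (Ht1 : 0 <= tau1 < t).
    { unfold tau1. split.
      - apply Rmult_lt_compat_l with (r := eps) in Hc; auto.
        replace (eps * (t/eps)) with t in Hc by (field; lra). lra.
      - assert (0 < eps * Av^2) by (apply Rmult_lt_0_compat; nra). lra. }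
    assert (Hs1 : sv tau1 = Av^2) by (unfold sv, tau1; field; lra).
    pose proof (I_upper tau1 Ht1) as H1. pose proof (I_piece tau1 Ht1) as H2.
    rewrite Hs1 in H2. rewrite sqrt_pow2 in H2 by lra.
    assert (0 < sqrt (sv 0)) by (apply sqrt_lt_R0, sv_pos; lra). assert (0 < / sqrt (sv 0)) by (apply Rinv_0_lt_compat; lra).
    assert (2 * Av * kap * (/ Av - / sqrt (sv 0)) <= 2 * kap).
    { replace (2 * Av * kap * (/ Av - / sqrt (sv 0))) with (2*kap - 2 * Av * kap * / sqrt (sv 0)) by (field; split; lra).
      assert (0 <= 2 * Av * kap * / sqrt (sv 0)).
      { apply Rmult_le_pos; [|lra]. nra. }
      lra. }
    pose proof (HPhi tau1 ltac:(lra)) as HP1. rewrite Hs1, sqrt_pow2 in HP1 by lra.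
    replace (4 * Av / Av) with 4 in HP1 by (field; lra).
    assert (kap * Phi tau1 <= kap * 4) by (apply Rmult_le_compat_l; lra).
    lra.
Qed.

Lemma kPhi0 : kap * Phi 0 = 4 * t * Gamma1 a (t / eps) / (a + 2 * t / delta).
Proof.
  assert (HS : 0 < t/eps) by (apply Rdiv_lt_0_compat; lra).
  rewrite Gamma1_eq by auto. unfold kap, Phi, Ev.
  assert (E1 : sv 0 = t/eps) by (unfold sv; f_equal; ring).
  assert (E2 : xi 0 = a) by (unfold xi; field; lra).
  assert (E3 : Bv 0 = a + 2 * t / delta) by (unfold Bv; field; lra).
  rewrite E1, E2, E3.
  pose proof PI_RGT_0.
  rewrite (sqrt_mult (4*PI) (t/eps)) by lra.
  set (r := sqrt (t/eps)). assert (Hr : r * r = t/eps) by (apply sqrt_sqrt; lra).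
  assert (Hr0 : 0 < r) by (apply sqrt_lt_R0; lra).
  pose proof sqrt4PI_ge1. set (p := sqrt (4*PI)) in *.
  assert (HA : 0 < a + 2 * t / delta) by (assert (0 < 2*t/delta) by (apply Rdiv_lt_0_compat; lra); lra).
  set (E := exp _). clearbody r p E.
  replace t with (eps * (r * r)) at 2 by (rewrite Hr; field; lra).
  field. repeat split; try lra. nra.
Qed.

Lemma I_up_gen : RInt Jx 0 t <= 4 * t * Gamma1 a (t / eps) / (a + 2 * t / delta).
Proof.
  rewrite <- kPhi0. pose proof (I_upper 0 ltac:(lra)) as H.
  rewrite RInt_point in H. unfold zero in H; simpl in H. lra.
Qed.

Lemma I_low_gen : 4 * t * Gamma1 a (t / eps) / ((a + 2 * t / delta) * (1 + 2 * (t / eps) / Av ^ 2))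
   <= RInt Jx 0 t.
Proof.
  pose proof (I_lower 0 ltac:(lra)) as H.
  assert (Hz : RInt Jx 0 0 = 0) by (rewrite RInt_point; reflexivity). rewrite Hz in H.
  assert (E1 : sv 0 = t/eps) by (unfold sv; f_equal; ring). rewrite E1 in H.
  assert (HA : 0 < Av) by (unfold Av; assert (0 < t/delta) by (apply Rdiv_lt_0_compat; lra); lra).
  assert (HA2 : 0 < a + 2 * t / delta) by (assert (0 < 2*t/delta) by (apply Rdiv_lt_0_compat; lra); lra).
  assert (0 < 1 + 2 * (t / eps) / Av ^ 2) by (assert (0 <= 2*(t/eps)/Av^2) by (apply Rdiv_le_0_compat; [apply Rmult_le_pos; [lra| left; apply Rdiv_lt_0_compat; lra]| nra]); lra).
  replace (4 * t * Gamma1 a (t / eps) / ((a + 2 * t / delta) * (1 + 2 * (t / eps) / Av ^ 2)))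
    with (kap * Phi 0 / (1 + 2 * (t / eps) / Av ^ 2)).
  - lra.
  - rewrite kPhi0. field. repeat split; try lra; try nra. all: match goal with |- ?G => idtac G end.
Qed.

Lemma G1_half : Gamma1 a (t / (2 * eps)) = sqrt 2 * exp (- (a ^ 2 / (4 * (t / eps)))) * Gamma1 a (t / eps).
Proof.
  assert (HS : 0 < t/eps) by (apply Rdiv_lt_0_compat; lra).
  assert (HS2 : 0 < t/(2*eps)) by (apply Rdiv_lt_0_compat; lra).
  rewrite !Gamma1_eq by auto.
  pose proof PI_RGT_0.
  replace (4 * PI * (t / eps)) with ((4 * PI * (t / (2 * eps))) * 2) by (field; lra).
  rewrite (sqrt_mult (4 * PI * (t / (2 * eps))) 2) by nra.
  replace (- a ^ 2 / (4 * (t / (2 * eps)))) with (- (a ^ 2 / (4 * (t / eps))) + - (a ^ 2 / (4 * (t / eps)))) by (field; lra).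
  rewrite exp_plus.
  assert (0 < sqrt (4 * PI * (t / (2 * eps)))) by (apply sqrt_lt_R0; nra).
  assert (0 < sqrt 2) by (apply sqrt_lt_R0; lra).
  replace (- a ^ 2 / (4 * (t / eps))) with (- (a ^ 2 / (4 * (t / eps)))) by (field; lra).
  field. split; lra.
Qed.

Lemma R24up : RInt Jx 0 t <= 2 * delta * Gamma1 a (t / eps).
Proof.
  pose proof I_up_gen as H.
  assert (HG : 0 < Gamma1 a (t/eps)) by (apply Gamma1_pos, Rdiv_lt_0_compat; lra).
  set (ia := t / delta). assert (Hia : t = delta * ia) by (unfold ia; field; lra).
  assert (Hia0 : 0 < ia) by (unfold ia; apply Rdiv_lt_0_compat; lra).
  replace (2 * t / delta) with (2 * ia) in H by (unfold ia; field; lra).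
  eapply Rle_trans; [apply H|].
  replace (4 * t * Gamma1 a (t / eps) / (a + 2 * ia)) with ((4 * t / (a + 2 * ia)) * Gamma1 a (t / eps)) by (field; lra).
  apply Rmult_le_compat_r; [lra|]. apply div_le_mul; [lra|]. rewrite Hia. nra.
Qed.

Lemma R3up : eps * a ^ 2 >= 6 * t ->
  RInt Jx 0 t <= eps * ((a + t / delta) * Gamma1 a (t / eps)).
Proof.
  intros Hr. pose proof I_up_gen as H.
  assert (HG : 0 < Gamma1 a (t/eps)) by (apply Gamma1_pos, Rdiv_lt_0_compat; lra).
  set (ia := t / delta) in *. assert (Hia : t = delta * ia) by (unfold ia; field; lra).
  assert (Hia0 : 0 < ia) by (unfold ia; apply Rdiv_lt_0_compat; lra).
  replace (2 * t / delta) with (2 * ia) in H by (unfold ia; field; lra).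
  eapply Rle_trans; [apply H|].
  replace (4 * t * Gamma1 a (t / eps) / (a + 2 * ia)) with ((4 * t / (a + 2 * ia)) * Gamma1 a (t / eps)) by (field; lra).
  rewrite <- Rmult_assoc.
  apply Rmult_le_compat_r; [lra|]. apply div_le_mul; [lra|].
  assert (0 <= eps * a * ia) by (apply Rmult_le_pos; [apply Rmult_le_pos|]; lra).
  assert (0 <= eps * ia * ia) by (apply Rmult_le_pos; [apply Rmult_le_pos|]; lra).
  nra.
Qed.

Lemma R34low (c : R) : 0 <= c -> eps * a ^ 2 >= 6 * t ->
  c * (a + 2 * t / delta) <= 2 * t + eps * a ^ 2 / 2 ->
  c * Gamma1 a (t / (2 * eps)) <= RInt Jx 0 t.
Proof.
  intros Hc Hr Hk. pose proof I_low_gen as H.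
  assert (HS : 0 < t/eps) by (apply Rdiv_lt_0_compat; lra).
  assert (HG : 0 < Gamma1 a (t/eps)) by (apply Gamma1_pos; auto).
  assert (Ha0 : 0 < a) by (destruct ha as [ha'|ha']; auto; exfalso; rewrite <- ha' in Hr; nra).
  set (ia := t / delta) in *. assert (Hia : t = delta * ia) by (unfold ia; field; lra).
  assert (Hia0 : 0 < ia) by (unfold ia; apply Rdiv_lt_0_compat; lra).
  replace (2 * t / delta) with (2 * ia) in H, Hk by (unfold ia; field; lra).
  assert (HA : Av = a + ia) by reflexivity.
  set (q := 1 + 2 * (t / eps) / Av ^ 2) in *.
  assert (Hq : 1 <= q <= 4/3).
  { unfold q. rewrite HA. assert (0 < (a + ia)^2) by nra.
    assert (0 <= 2 * (t/eps) / (a+ia)^2) by (apply Rdiv_le_0_compat; lra).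
    assert (2 * (t/eps) / (a+ia)^2 <= 1/3).
    { apply div_le_mul; auto.
      assert (t / eps <= a^2/6).
      { apply div_le_mul; auto. lra. }
      nra. }
    lra. }
  rewrite G1_half.
  set (u := a ^ 2 / (4 * (t / eps))).
  assert (Hu0 : 0 <= u) by (unfold u; apply Rdiv_le_0_compat; nra).
  assert (Hu : 2 * t * (1 + u) = 2 * t + eps * a ^ 2 / 2) by (unfold u; field; lra).
  pose proof (exp_neg_le u Hu0) as He. pose proof (exp_pos (-u)) as He0.
  pose proof sqrt2_le as Hs2. assert (Hs20 : 0 < sqrt 2) by (apply sqrt_lt_R0; lra).
  eapply Rle_trans; [|apply H].
  rewrite <- !Rmult_assoc.
  apply mul_div_le; [lra| nra|].
  set (e := exp (-u)) in *. set (s2 := sqrt 2) in *.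
  set (X := c * (a + 2 * ia)).
  assert (HX0 : 0 <= X) by (unfold X; nra).
  assert (HeX : e * X <= 2 * t) by (rewrite <- Hu in Hk; fold X in Hk; nra).
  assert (Hsq : s2 * q <= 2) by nra.
  replace (c * s2 * e * ((a + 2 * ia) * q)) with ((s2 * q) * (e * X)) by (unfold X; ring).
  assert (0 <= e * X) by nra.
  nra.
Qed.

Lemma R4low : eps * a ^ 2 >= 6 * t -> a + t / delta >= delta / eps ->
  delta / 5 * Gamma1 a (t / (2 * eps)) <= RInt Jx 0 t.
Proof.
  intros Hr HA. apply R34low; auto.
  - lra.
  - set (ia := t / delta) in *. assert (Hia : t = delta * ia) by (unfold ia; field; lra).
    assert (Hia0 : 0 < ia) by (unfold ia; apply Rdiv_lt_0_compat; lra).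
    replace (2 * t / delta) with (2 * ia) by (unfold ia; field; lra).
    assert (HA' : eps * (a + ia) >= delta).
    { apply Rge_le in HA. apply Rle_ge.
      apply Rmult_le_compat_l with (r := eps) in HA; [|lra].
      replace (eps * (delta / eps)) with delta in HA by (field; lra). lra. }
    assert (Hb : 2 * eps * a >= delta).
    { apply Rnot_lt_ge. intros Hc.
      assert (eps * ia * delta <= (eps * a) ^ 2 / 6) by (rewrite Hia in Hr; nra).
      assert (eps * ia * delta < delta ^ 2 / 24) by nra.
      assert (eps * ia < delta / 24) by nra.
      lra. }
    nra.
Qed.

Lemma R3low : eps * a ^ 2 >= 6 * t -> a + t / delta < delta / eps ->
  eps / 5 * ((a + t / delta) * Gamma1 a (t / (2 * eps))) <= RInt Jx 0 t.
Proof.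
  intros Hr HA. rewrite <- Rmult_assoc. apply R34low; auto.
  - assert (0 < t/delta) by (apply Rdiv_lt_0_compat; lra).
    apply Rmult_le_pos; [|lra]. apply Rdiv_le_0_compat; lra.
  - set (ia := t / delta) in *. assert (Hia : t = delta * ia) by (unfold ia; field; lra).
    assert (Hia0 : 0 < ia) by (unfold ia; apply Rdiv_lt_0_compat; lra).
    replace (2 * t / delta) with (2 * ia) by (unfold ia; field; lra).
    assert (HA' : eps * (a + ia) < delta).
    { apply Rmult_lt_compat_l with (r := eps) in HA; [|lra].
      replace (eps * (delta / eps)) with delta in HA by (field; lra). lra. }
    assert (H1 : eps * a * ia <= t) by (rewrite Hia; assert (0 <= eps * ia) by nra; nra).
    assert (H2 : eps * ia * ia <= t) by (rewrite Hia; assert (0 <= eps * a) by nra; nra).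
    replace (eps / 5 * (a + ia) * (a + 2 * ia)) with ((eps * a^2 + 3 * (eps * a * ia) + 2 * (eps * ia * ia)) / 5) by (field; lra).
    assert (0 <= eps * a ^ 2) by nra.
    lra.
Qed.

Lemma R2low : eps * a ^ 2 < 6 * t -> t >= 12 * delta ^ 2 / eps ->
  delta / 5 * Gamma1 a (t / (2 * eps)) <= RInt Jx 0 t.
Proof.
  intros Hr Ht. pose proof I_low_gen as H.
  assert (HS : 0 < t/eps) by (apply Rdiv_lt_0_compat; lra).
  assert (HG : 0 < Gamma1 a (t/eps)) by (apply Gamma1_pos; auto).
  assert (Het : eps * t >= 12 * delta ^ 2).
  { apply Rge_le in Ht. apply Rle_ge. apply Rmult_le_compat_l with (r := eps) in Ht; [|lra].
    replace (eps * (12 * delta ^ 2 / eps)) with (12 * delta ^ 2) in Ht by (field; lra). lra. }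
  set (ia := t / delta) in *. assert (Hia : t = delta * ia) by (unfold ia; field; lra).
  assert (Hia0 : 0 < ia) by (unfold ia; apply Rdiv_lt_0_compat; lra).
  replace (2 * t / delta) with (2 * ia) in H by (unfold ia; field; lra).
  assert (HA : Av = a + ia) by reflexivity.
  assert (Hei : eps * ia ^ 2 >= 12 * t).
  { assert (eps * ia ^ 2 * delta ^ 2 >= 12 * t * delta ^ 2) by (rewrite Hia in Het; nra).
    nra. }
  assert (Hai : a <= ia).
  { apply Rnot_lt_le; intro Hlt. assert (ia^2 < a^2) by nra. assert (eps * ia^2 <= eps * a^2) by (apply Rmult_le_compat_l; lra). lra. }
  set (q := 1 + 2 * (t / eps) / Av ^ 2) in *.
  assert (Hq : 1 <= q <= 7/6).
  { unfold q. rewrite HA. assert (0 < (a + ia)^2) by nra.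
    assert (0 <= 2 * (t/eps) / (a+ia)^2) by (apply Rdiv_le_0_compat; lra).
    assert (2 * (t/eps) / (a+ia)^2 <= 1/6).
    { apply div_le_mul; auto.
      assert (t / eps <= ia^2/12).
      { apply div_le_mul; auto. lra. }
      nra. }
    lra. }
  rewrite G1_half.
  set (u := a ^ 2 / (4 * (t / eps))).
  assert (Hu0 : 0 <= u) by (unfold u; apply Rdiv_le_0_compat; nra).
  assert (He : exp (- u) <= 1) by (rewrite <- exp_0; apply exp_le_mono; lra).
  pose proof (exp_pos (-u)) as He0.
  pose proof sqrt2_le as Hs2. assert (Hs20 : 0 < sqrt 2) by (apply sqrt_lt_R0; lra).
  eapply Rle_trans; [|apply H].
  rewrite <- !Rmult_assoc.
  apply mul_div_le; [lra| nra|].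
  set (e := exp (-u)) in *. set (s2 := sqrt 2) in *.
  assert (Hse : s2 * e <= 3/2) by nra.
  assert (HD : (a + 2 * ia) * q <= 3 * ia * (7/6)) by nra.
  assert (0 <= (a + 2 * ia) * q) by nra.
  replace (delta / 5 * s2 * e * ((a + 2 * ia) * q)) with ((delta / 5) * (s2 * e) * ((a + 2 * ia) * q)) by ring.
  assert (delta / 5 * (s2 * e) <= delta / 5 * (3/2)) by (apply Rmult_le_compat_l; lra).
  assert (0 <= delta / 5 * (s2 * e)) by (apply Rmult_le_pos; nra).
  assert (delta / 5 * (s2 * e) * ((a + 2 * ia) * q) <= delta / 5 * (3/2) * (3 * ia * (7/6))).
  { apply Rmult_le_compat; auto. }
  rewrite Hia. nra.
Qed.

Lemma R1low : eps * a ^ 2 < 6 * t -> t < 12 * delta ^ 2 / eps ->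
  eps * exp (-9) / 16 <= RInt Jx 0 t.
Proof.
  intros Hr Ht.
  assert (Het : eps * t < 12 * delta ^ 2).
  { apply Rmult_lt_compat_l with (r := eps) in Ht; [|lra].
    replace (eps * (12 * delta ^ 2 / eps)) with (12 * delta ^ 2) in Ht by (field; lra). lra. }
  set (ia := t / delta). assert (Hia : t = delta * ia) by (unfold ia; field; lra).
  assert (Hia0 : 0 < ia) by (unfold ia; apply Rdiv_lt_0_compat; lra).
  assert (HA : Av = a + ia) by reflexivity.
  set (A := Av) in *.
  assert (HA0 : 0 < A) by lra.
  assert (Hei : eps * ia ^ 2 < 12 * t).
  { assert (eps * ia ^ 2 * delta ^ 2 < 12 * t * delta ^ 2) by (rewrite Hia in Het; nra). nra. }
  assert (HA2 : eps * A ^ 2 < 36 * t) by (rewrite HA; nra).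
  assert (Hea : eps * a < 9 * delta) by (apply Rnot_le_lt; intro; nra).
  assert (Hei2 : eps * ia < 12 * delta) by (rewrite Hia in Het; nra).
  assert (HeA : eps * A <= 36 * delta) by (rewrite HA; nra).
  set (tau0 := t - eps * A ^ 2 / 36).
  assert (Ht0 : 0 <= tau0 < t).
  { unfold tau0. split; [|assert (0 < eps * A^2 / 36) by (apply Rdiv_lt_0_compat; [apply Rmult_lt_0_compat; [lra| apply pow_lt; lra]| lra]); lra].
    assert (eps * A ^ 2 / 36 <= t) by (apply div_le_mul; lra). lra. }
  pose proof (I_lower tau0 Ht0) as H.
  pose proof (RI_nonneg tau0 (proj1 Ht0)) as H0.
  assert (Hs0 : sv tau0 = A ^ 2 / 36) by (unfold sv, tau0; field; lra).
  rewrite Hs0 in H. fold A in H.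
  replace (1 + 2 * (A ^ 2 / 36) / A ^ 2) with (19/18) in H by (field; lra).
  assert (HPhi : exp (-9) / 3 <= Phi tau0).
  { unfold Phi. rewrite Hs0.
    replace (A ^ 2 / 36) with ((A / 6) ^ 2) by field. rewrite sqrt_pow2 by lra.
    assert (HB : Bv tau0 = A + eps * A ^ 2 / (36 * delta)) by (unfold Bv, tau0; rewrite HA; unfold ia; field; lra).
    assert (HB2 : 0 < Bv tau0 <= 2 * A).
    { rewrite HB. split. assert (0 <= eps * A ^ 2 / (36 * delta)) by (apply Rdiv_le_0_compat; nra). lra.
      assert (eps * A ^ 2 / (36 * delta) <= A) by (apply div_le_mul; nra). lra. }
    assert (HE : exp (-9) <= Ev tau0).
    { unfold Ev. apply exp_le_mono. rewrite Hs0.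
      assert (Hx : 0 <= xi tau0 <= A).
      { unfold xi. rewrite HA. unfold ia. split.
        - assert (0 <= tau0/delta) by (apply Rdiv_le_0_compat; lra). lra.
        - assert (tau0/delta <= t/delta) by (unfold Rdiv; apply Rmult_le_compat_r; [left; apply Rinv_0_lt_compat|]; lra). lra. }
      assert (xi tau0 ^ 2 / (4 * (A ^ 2 / 36)) <= 9).
      { apply div_le_mul; [nra|]. nra. }
      replace (- xi tau0 ^ 2 / (4 * (A ^ 2 / 36))) with (- (xi tau0 ^ 2 / (4 * (A ^ 2 / 36)))) by (field; lra).
      lra. }
    pose proof (exp_pos (-9)).
    assert (4 * (A / 6) / Bv tau0 >= 1/3).
    { apply Rle_ge. apply Rmult_le_reg_r with (Bv tau0); [lra|].
      replace (4*(A/6)/Bv tau0 * Bv tau0) with (4*(A/6)) by (field; lra). lra. }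
    nra. }
  pose proof kap_pos.
  assert (Hk : eps / 4 <= kap).
  { unfold kap. pose proof sqrt4PI_le4. pose proof sqrt4PI_ge1.
    unfold Rdiv. apply Rmult_le_compat_l; [lra|]. apply Rinv_le_contravar; lra. }
  assert (eps / 4 * (exp (-9) / 3) <= kap * Phi tau0) by (apply Rmult_le_compat; try lra; pose proof (exp_pos (-9)); lra).
  assert (eps * exp (-9) / 16 <= kap * Phi tau0 / (19/18)).
  { apply Rmult_le_reg_r with (19/18); [lra|]. replace (kap * Phi tau0 / (19/18) * (19/18)) with (kap * Phi tau0) by (field; lra).
    pose proof (exp_pos (-9)). nra. }
  lra.
Qed.

End OneD.

Lemma sqdist_nonneg n u v : 0 <= sqdist n u v.
Proof. induction n; simpl; [lra|]. pose proof (pow2_ge_0 (u n - v n)). lra. Qed.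

Lemma Rpower_pos x y : 0 < Rpower x y.
Proof. unfold Rpower; apply exp_pos. Qed.

Lemma Gammad_pos d r2 T : 0 < Gammad d r2 T.
Proof. unfold Gammad. apply Rmult_lt_0_compat; [apply Rinv_0_lt_compat, Rpower_pos| apply exp_pos]. Qed.

Lemma Gammad_up d r2 T0 T T1 : 0 <= r2 -> 0 < T0 -> T0 <= T -> T <= T1 ->
  Gammad d r2 T <= Rpower (T1 / T0) (INR d / 2) * Gammad d r2 T1.
Proof.
  intros Hr H0 H1 H2. unfold Gammad. set (p := INR d / 2).
  assert (Hp : 0 <= p) by (unfold p; pose proof (pos_INR d); lra).
  pose proof PI_RGT_0.
  assert (HR : Rpower (4 * PI * T1) p = Rpower (T1 / T0) p * Rpower (4 * PI * T0) p).
  { rewrite Rpower_mult_distr by (try apply Rdiv_lt_0_compat; nra). f_equal. field; lra. }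
  rewrite HR.
  assert (Hi : / Rpower (4 * PI * T) p <= / Rpower (4 * PI * T0) p).
  { apply Rinv_le_contravar; [apply Rpower_pos|]. apply Rle_Rpower_l; auto. nra. }
  assert (He : exp (- r2 / (4 * T)) <= exp (- r2 / (4 * T1))).
  { apply exp_le_mono. unfold Rdiv. rewrite !Ropp_mult_distr_l_reverse. apply Ropp_le_contravar.
    apply Rmult_le_compat_l; auto. apply Rinv_le_contravar; lra. }
  pose proof (Rpower_pos (T1/T0) p). pose proof (Rpower_pos (4*PI*T0) p).
  replace (Rpower (T1 / T0) p * (/ (Rpower (T1 / T0) p * Rpower (4 * PI * T0) p) * exp (- r2 / (4 * T1))))
    with (/ Rpower (4 * PI * T0) p * exp (- r2 / (4 * T1))) by (field; lra).
  apply Rmult_le_compat; auto.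
  - left; apply Rinv_0_lt_compat, Rpower_pos.
  - left; apply exp_pos.
Qed.

Lemma Gammad_low d r2 T0 T T1 : 0 <= r2 -> 0 < T0 -> T0 <= T -> T <= T1 ->
  / Rpower (T1 / T0) (INR d / 2) * Gammad d r2 T0 <= Gammad d r2 T.
Proof.
  intros Hr H0 H1 H2. unfold Gammad. set (p := INR d / 2).
  assert (Hp : 0 <= p) by (unfold p; pose proof (pos_INR d); lra).
  pose proof PI_RGT_0.
  assert (HR : Rpower (4 * PI * T1) p = Rpower (T1 / T0) p * Rpower (4 * PI * T0) p).
  { rewrite Rpower_mult_distr by (try apply Rdiv_lt_0_compat; nra). f_equal. field; lra. }
  assert (Hi : / Rpower (4 * PI * T1) p <= / Rpower (4 * PI * T) p).
  { apply Rinv_le_contravar; [apply Rpower_pos|]. apply Rle_Rpower_l; auto. nra. }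
  rewrite HR in Hi.
  assert (He : exp (- r2 / (4 * T0)) <= exp (- r2 / (4 * T))).
  { apply exp_le_mono. unfold Rdiv. rewrite !Ropp_mult_distr_l_reverse. apply Ropp_le_contravar.
    apply Rmult_le_compat_l; auto. apply Rinv_le_contravar; lra. }
  pose proof (Rpower_pos (T1/T0) p). pose proof (Rpower_pos (4*PI*T0) p).
  replace (/ Rpower (T1 / T0) p * (/ Rpower (4 * PI * T0) p * exp (- r2 / (4 * T0))))
    with (/ (Rpower (T1 / T0) p * Rpower (4 * PI * T0) p) * exp (- r2 / (4 * T0))) by (field; lra).
  apply Rmult_le_compat; auto.
  - left; apply Rinv_0_lt_compat. apply Rmult_lt_0_compat; auto.
  - left; apply exp_pos.
Qed.

Lemma Gammad_cont d r2 (T : R -> R) (dT : R -> R) z :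
  (forall w, is_derive T w (dT w)) -> 0 < T z -> continuous (fun w => Gammad d r2 (T w)) z.
Proof.
  intros HT Hz. apply (@ex_derive_continuous R_AbsRing R_NormedModule).
  unfold Gammad, Rpower.
  pose proof PI_RGT_0.
  apply (ex_derive_mult (fun w => / exp (INR d / 2 * ln (4 * PI * T w))) (fun w => exp (- r2 / (4 * T w)))).
  - apply (ex_derive_comp (fun x => / exp (INR d / 2 * ln (4 * PI * x))) T).
    + auto_derive. split; [nra|]. split; auto. apply Rgt_not_eq, exp_pos.
    + eexists; apply HT.
  - apply (ex_derive_comp (fun x => exp (- r2 / (4 * x))) T).
    + auto_derive. lra.
    + eexists; apply HT.
Qed.

Lemma dGamma1_eq x s : 0 < s -> dGamma1 x s = - x / (2 * s) * (exp (- x ^ 2 / (4 * s)) / sqrt (4 * PI * s)).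
Proof.
  intros Hs. unfold dGamma1. apply is_derive_unique.
  assert (Hq : 0 < sqrt (4 * PI * s)) by (apply sqrt_lt_R0; pose proof PI_RGT_0; nra).
  apply is_derive_ext with (fun z => exp (- z ^ 2 / (4 * s)) / sqrt (4 * PI * s)).
  - intros z. unfold Gamma1, Gammad.
    replace (INR 1 / 2) with (/ 2) by (simpl; field).
    rewrite Rpower_sqrt by (pose proof PI_RGT_0; nra). unfold Rdiv. apply Rmult_comm.
  - auto_derive; [auto| match goal with |- ?A = ?B => change (@eq R A B) end; idtac]. all: set (q := sqrt (4*PI*s)) in *; set (E := exp _); field; split; lra.
Qed.


Lemma RInt_scal_R (f : R -> R) (u v l : R) : ex_RInt f u v ->
  RInt (fun x => l * f x) u v = l * RInt f u v.
Proof. intros H. exact (RInt_scal f u v l H). Qed.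

Lemma ex_RInt_scal_R (f : R -> R) (u v l : R) : ex_RInt f u v ->
  ex_RInt (fun x => l * f x) u v.
Proof. intros H. exact (ex_RInt_scal f u v l H). Qed.

Lemma close_low (C K c h G I Hv : R) : 0 < K -> 0 < c -> 0 <= G -> 0 <= h ->
  K / c <= C -> c * h <= I -> / K * G * I <= Hv -> / C * h * G <= Hv.
Proof.
  intros HK Hc HG Hh HC HI HH.
  assert (HC0 : 0 < C) by (assert (0 < K / c) by (apply Rdiv_lt_0_compat; auto); lra).
  assert (HiC : / C <= c / K).
  { replace (c / K) with (/ (K / c)) by (field; lra). apply Rinv_le_contravar; auto.
    apply Rdiv_lt_0_compat; auto. }
  assert (0 < / K) by (apply Rinv_0_lt_compat; auto).
  assert (/ C * h * G <= c / K * h * G) by (apply Rmult_le_compat_r; auto; apply Rmult_le_compat_r; auto).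
  replace (c / K * h * G) with (/ K * G * (c * h)) in H0 by (field; lra).
  assert (/ K * G * (c * h) <= / K * G * I) by (apply Rmult_le_compat_l; auto; apply Rmult_le_pos; lra).
  lra.
Qed.

Lemma close_up (C K c h G I Hv : R) : 0 < K -> 0 <= G -> 0 <= h ->
  K * c <= C -> I <= c * h -> Hv <= K * G * I -> Hv <= C * h * G.
Proof.
  intros HK HG Hh HC HI HH.
  assert (K * G * I <= K * G * (c * h)) by (apply Rmult_le_compat_l; auto; apply Rmult_le_pos; lra).
  replace (K * G * (c * h)) with ((K * c) * (h * G)) in H by ring.
  assert ((K * c) * (h * G) <= C * (h * G)) by (apply Rmult_le_compat_r; auto; apply Rmult_le_pos; lra).
  replace (C * h * G) with (C * (h * G)) by ring. lra.
Qed.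

Theorem theorem1p2 (N : nat) (eps delta k : R) :
  (2 <= N)%nat -> 0 < eps -> 0 < delta -> 0 < k ->
  let Lam := Rmax delta (k * eps) in
  let lam := Rmin delta (k * eps) in
  exists C : R, 0 < C /\
  forall (x' y' : nat -> R) (xN yN t : R),
    0 <= xN -> 0 <= yN -> 0 < t ->
    let a := xN + yN in
    let H := Hker N eps delta k x' xN y' yN t in
    let Glow := GammaN1 N x' y' (lam / (eps * delta) * t) in
    let Gup := GammaN1 N x' y' (Lam / (eps * delta) * t) in
    (* D1 *)
    ((eps * a ^ 2 < 6 * t /\ t < 12 * delta ^ 2 / eps) ->
       / C * 1 * Glow <= H /\ H <= C * 1 * Gup) /\
    (* D2 \/ D4 *)
    (((eps * a ^ 2 < 6 * t /\ t >= 12 * delta ^ 2 / eps) \/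
      (eps * a ^ 2 >= 6 * t /\ a + t / delta >= delta / eps)) ->
       / C * Gamma1 a (t / (2 * eps)) * Glow <= H /\
       H <= C * Gamma1 a (t / eps) * Gup) /\
    (* D3 *)
    ((eps * a ^ 2 >= 6 * t /\ a + t / delta < delta / eps) ->
       / C * ((a + t / delta) * Gamma1 a (t / (2 * eps))) * Glow <= H /\
       H <= C * ((a + t / delta) * Gamma1 a (t / eps)) * Gup).
Proof.
  intros HN heps hdel hk Lam lam.
  assert (Hke : 0 < k * eps) by (apply Rmult_lt_0_compat; auto).
  assert (Hlam : 0 < lam) by (unfold lam, Rmin; destruct (Rle_dec delta (k * eps)); lra).
  assert (HlL : lam <= Lam) by (unfold lam, Lam, Rmin, Rmax; destruct (Rle_dec delta (k * eps)); lra).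
  set (p := INR (N - 1) / 2).
  set (K := Rpower (Lam / lam) p).
  assert (HK : 0 < K) by apply Rpower_pos.
  set (Sm := 6 * eps + 2 * delta + eps + 16 * exp 9 / eps + 5 / delta + 5 / eps).
  assert (H9 : 0 < 16 * exp 9 / eps) by (apply Rdiv_lt_0_compat; [pose proof (exp_pos 9); lra| lra]).
  assert (H5d : 0 < 5 / delta) by (apply Rdiv_lt_0_compat; lra).
  assert (H5e : 0 < 5 / eps) by (apply Rdiv_lt_0_compat; lra).
  exists (K * Sm). split.
  { apply Rmult_lt_0_compat; auto. unfold Sm. lra. }
  intros x' y' xN yN t HxN HyN Ht.
  set (a := xN + yN).
  assert (Ha : 0 <= a) by (unfold a; lra).
  set (I := RInt (Jx eps delta a t) 0 t).
  set (r2 := sqdist (N - 1) x' y').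
  assert (Hr2n : 0 <= r2) by apply sqdist_nonneg.
  set (T := fun tau => (t - tau) / eps + k / delta * tau).
  set (T0 := lam / (eps * delta) * t).
  set (T1 := Lam / (eps * delta) * t).
  assert (HT0 : 0 < T0) by (unfold T0; apply Rmult_lt_0_compat; auto; apply Rdiv_lt_0_compat; auto; apply Rmult_lt_0_compat; auto).
  assert (HT : forall tau, 0 <= tau <= t -> T0 <= T tau <= T1).
  { intros tau [Hta Htb]. unfold T0, T1, T, lam, Lam, Rmin, Rmax.
    destruct (Rle_dec delta (k * eps)) as [Hd|Hd].
    - split.
      + cut (0 <= (t - tau) / eps + k / delta * tau - delta / (eps * delta) * t); [lra|]. replace ((t - tau) / eps + k / delta * tau - delta / (eps * delta) * t) with (tau * (k * eps - delta) / (eps * delta)) by (field; lra).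
        apply Rdiv_le_0_compat; [apply Rmult_le_pos; lra| nra].
      + cut (0 <= k * eps / (eps * delta) * t - ((t - tau) / eps + k / delta * tau)); [lra|]. replace (k * eps / (eps * delta) * t - ((t - tau) / eps + k / delta * tau)) with ((t - tau) * (k * eps - delta) / (eps * delta)) by (field; lra).
        apply Rdiv_le_0_compat; [apply Rmult_le_pos; lra| nra].
    - apply Rnot_le_lt in Hd. split.
      + cut (0 <= (t - tau) / eps + k / delta * tau - k * eps / (eps * delta) * t); [lra|]. replace ((t - tau) / eps + k / delta * tau - k * eps / (eps * delta) * t) with ((t - tau) * (delta - k * eps) / (eps * delta)) by (field; lra).
        apply Rdiv_le_0_compat; [apply Rmult_le_pos; lra| nra].
      + cut (0 <= delta / (eps * delta) * t - ((t - tau) / eps + k / delta * tau)); [lra|]. replace (delta / (eps * delta) * t - ((t - tau) / eps + k / delta * tau)) with (tau * (delta - k * eps) / (eps * delta)) by (field; lra).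
        apply Rdiv_le_0_compat; [apply Rmult_le_pos; lra| nra]. }
  assert (HTT : T1 / T0 = Lam / lam) by (unfold T0, T1; field; repeat split; lra).
  set (g := fun tau => Gammad (N - 1) r2 (T tau) * Jx eps delta a t tau).
  assert (Hgex : ex_RInt g 0 t).
  { apply (@ex_RInt_continuous R_CompleteNormedModule). intros z Hz.
    rewrite Rmin_left, Rmax_right in Hz by lra.
    unfold g. apply (@continuous_mult R_UniformSpace R_AbsRing (fun w => Gammad (N - 1) r2 (T w)) (Jx eps delta a t)).
    - apply (Gammad_cont _ _ T (fun _ => - / eps + k / delta)).
      + intros w. unfold T. auto_derive; auto. field; lra.
      + pose proof (HT z Hz). lra.
    - apply Jx_cont; auto. }
  assert (HHg : Hker N eps delta k x' xN y' yN t = RInt g 0 t).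
  { unfold Hker.
    rewrite (RInt_ext _ (fun tau => (- (1/2)) * g tau)).
    - rewrite RInt_scal_R by auto. field.
    - intros z Hz. rewrite Rmin_left, Rmax_right in Hz by lra.
      unfold g, GammaN1. fold r2. fold (T z).
      rewrite dGamma1_eq by (apply Rdiv_lt_0_compat; lra).
      unfold Jx, cut. destruct (Rlt_dec z t) as [_|Hc]; [|lra].
      unfold J, Ev, xi, sv. fold a.
      assert (Hs : 0 < (t - z) / eps) by (apply Rdiv_lt_0_compat; lra).
      assert (0 < sqrt (4 * PI * ((t - z) / eps))) by (apply sqrt_lt_R0; pose proof PI_RGT_0; nra).
      set (q := sqrt (4 * PI * ((t - z) / eps))) in *.
      match goal with |- ?A = ?B => change (@eq R A B) end. set (E := exp _). field. split; lra. }
  assert (HIex := Jx_exRInt eps delta a t heps hdel Ha Ht 0 t).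
  assert (HJ0 : forall z, 0 < z < t -> 0 <= Jx eps delta a t z) by (intros; apply Jx_nonneg; auto; lra).
  assert (HI0 : 0 <= I) by (apply RI_nonneg; auto; lra).
  assert (Hup : Hker N eps delta k x' xN y' yN t <= K * GammaN1 N x' y' (Lam / (eps * delta) * t) * I).
  { rewrite HHg. unfold I. rewrite <- RInt_scal_R with (l := K * GammaN1 N x' y' (Lam / (eps * delta) * t)) by auto.
    apply RInt_le; [lra| auto| apply ex_RInt_scal_R; auto|].
    intros z Hz. unfold g.
    apply Rmult_le_compat_r; [apply HJ0; auto|].
    unfold K. rewrite <- HTT. unfold GammaN1. fold r2. fold T1.
    apply (Gammad_up _ _ T0 (T z) T1); auto; apply HT; lra. }
  assert (Hlow : / K * GammaN1 N x' y' (lam / (eps * delta) * t) * I <= Hker N eps delta k x' xN y' yN t).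
  { rewrite HHg. unfold I. rewrite <- RInt_scal_R with (l := / K * GammaN1 N x' y' (lam / (eps * delta) * t)) by auto.
    apply RInt_le; [lra| apply ex_RInt_scal_R; auto| auto|].
    intros z Hz. unfold g.
    apply Rmult_le_compat_r; [apply HJ0; auto|].
    unfold K. rewrite <- HTT. unfold GammaN1. fold r2. fold T0.
    apply (Gammad_low _ _ T0 (T z) T1); auto; apply HT; lra. }
  assert (HGl : 0 <= GammaN1 N x' y' (lam / (eps * delta) * t)) by (left; apply Gammad_pos).
  assert (HGu : 0 <= GammaN1 N x' y' (Lam / (eps * delta) * t)) by (left; apply Gammad_pos).
  assert (HG1 : 0 <= Gamma1 a (t / eps)) by (left; apply Gamma1_pos; apply Rdiv_lt_0_compat; lra).
  assert (HG2 : 0 <= Gamma1 a (t / (2 * eps))) by (left; apply Gamma1_pos; apply Rdiv_lt_0_compat; lra).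
  assert (HA0 : 0 <= a + t / delta) by (assert (0 < t/delta) by (apply Rdiv_lt_0_compat; lra); lra).
  assert (HSm : forall c, 0 < c -> c <= Sm -> K * c <= K * Sm) by (intros; apply Rmult_le_compat_l; lra).
  assert (HSm' : forall c, 0 < c -> / c <= Sm -> K / c <= K * Sm) by (intros; unfold Rdiv; apply Rmult_le_compat_l; lra).
  fold I in Hup, Hlow.
  split; [|split].
  - intros [Hr1 Hr2].
    split.
    + apply (close_low _ K (eps * exp (-9) / 16) 1 _ I); auto; try lra.
      * apply Rdiv_lt_0_compat; [apply Rmult_lt_0_compat; [lra| apply exp_pos]| lra].
      * apply HSm'. apply Rdiv_lt_0_compat; [apply Rmult_lt_0_compat; [lra| apply exp_pos]| lra].
        replace (/ (eps * exp (-9) / 16)) with (16 * exp 9 / eps).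
        { unfold Sm. lra. }
        assert (Hm : exp (-9) = / exp 9) by (rewrite <- exp_Ropp; f_equal; lra). rewrite Hm. pose proof (exp_pos 9). field. split; lra.
      * rewrite Rmult_1_r. apply R1low; auto.
    + apply (close_up _ K (6 * eps) 1 _ I); auto; try lra.
      * apply HSm; [lra| unfold Sm; lra].
      * rewrite Rmult_1_r. apply I_D1up; auto.
  - intros Hr.
    split.
    + apply (close_low _ K (delta / 5) _ _ I); auto; try lra.
      * apply HSm'. apply Rdiv_lt_0_compat; lra.
        replace (/ (delta / 5)) with (5 / delta) by (field; lra). unfold Sm; lra.
      * destruct Hr as [[Hr1 Hr2]|[Hr1 Hr2]]; [apply R2low| apply R4low]; auto.
    + apply (close_up _ K (2 * delta) _ _ I); auto; try lra.
      * apply HSm; [lra| unfold Sm; lra].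
      * apply R24up; auto.
  - intros [Hr1 Hr2].
    split.
    + apply (close_low _ K (eps / 5) _ _ I); auto; try lra.
      * apply Rmult_le_pos; auto.
      * apply HSm'. apply Rdiv_lt_0_compat; lra.
        replace (/ (eps / 5)) with (5 / eps) by (field; lra). unfold Sm; lra.
      * apply R3low; auto.
    + apply (close_up _ K eps _ _ I); auto; try lra.
      * apply Rmult_le_pos; auto.
      * apply HSm; [lra| unfold Sm; lra].
      * apply R3up; auto.
Qed.
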